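(* Let $k\ge0$ and let $n$ be a positive integer of length $l$ with $k(n)\le k$. Then $$\sum_{\substack{m:\ \mathrm{ld}_l(m)=n\\ k(m)=k}}\frac1m=\sum_{m=0}^{\infty}(-1)^m\frac{u_{k-k(n);m}}{n^{m+1}}.$$
   Context: Fix $b\ge2$ and $d\in\{0,\dots,b-1\}$. For an integer $n\ge0$, its length $l(n)$ is the smallest $l\ge0$ with $n<b^l$, and $k(n)$ is the number of occurrences of $d$ in its base-$b$ representation without leading zeros. For $m>0$ of length $q\ge l$, $\mathrm{ld}_l(m)=\lfloor m/b^{q-l}\rfloor$ (the sum on the left runs over positive integers $m$ of length $\ge l$). A string is a finite sequence $X=(d_l,\dots,d_1)$ of digits in $\{0,\dots,b-1\}$ (leading zeros allowed), of length $|X|=l\ge0$; its value is $n(X)=\sum_{i=1}^{l}d_ib^{i-1}$ ($0$ for the empty string). For $k\ge0$, $\mu_k=\sum_{X}b^{-|X|}\delta_{n(X)/b^{|X|}}$, the sum over all strings $X$ containing $d$ exactly $k$ times; it is a finite measure on $[0,1)$ of total mass $b$. The moments are $u_{k;m}=\int_{[0,1)}x^m\,d\mu_k(x)$ (with $0^0=1$). *)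

(* Defs.v *)
From HB Require Import structures.
From mathcomp Require Import all_boot all_order all_algebra.
From mathcomp Require Import all_classical all_reals all_analysis.
Set Implicit Arguments. Unset Strict Implicit. Unset Printing Implicit Defensive.
Import Order.TTheory GRing.Theory Num.Theory.

(* length l(n): the smallest l >= 0 with n < b^l (for b >= 2 it is < n+1). *)
Definition blen (b n : nat) : nat := find (fun l => n < b ^ l) (iota 0 n.+1).

Definition bdigit (b n i : nat) : nat := (n %/ b ^ i) %% b.

(* k(n): number of occurrences of the digit d in the base-b representation
   of n without leading zeros, i.e. among the digits 0 .. l(n)-1. *)
Definition kcount (b d n : nat) : nat :=
  count (fun i => bdigit b n i == d) (iota 0 (blen b n)).

(* ld_l(m) = floor(m / b^(q-l)), q = l(m) (used for l(m) >= l). *)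
Definition ld (b l m : nat) : nat := m %/ b ^ (blen b m - l).

(* Strings: finite sequences of digits in {0,..,b-1}, written
   X = (d_l, ..., d_1) with the head of the list the most significant digit.
   Value n(X) = sum_{i=1}^{l} d_i b^(i-1). *)
Definition strval (b : nat) (X : seq 'I_b) : nat :=
  foldl (fun acc (x : 'I_b) => acc * b + val x) 0 X.

Definition strcount (b d : nat) (X : seq 'I_b) : nat :=
  count (fun x : 'I_b => val x == d) X.

Local Open Scope ring_scope.

(* u_{k;m} = int x^m d mu_k(x), where
   mu_k = sum_{X : count_d X = k} b^{-|X|} delta_{n(X)/b^|X|};
   integrating against this countable sum of weighted Dirac masses is the
   (nonnegative, unordered) sum below.  It is finite (total mass b). *)
Definition u (R : realType) (b d k m : nat) : R :=
  fine (\esum_(X in [set X : seq 'I_b | strcount d X = k])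
          ((b%:R ^- size X) * ((strval X)%:R / b%:R ^+ size X) ^+ m)%:E)%E.

(* Main.v *)
Require Import Defs.
From HB Require Import structures.
From mathcomp Require Import all_boot all_order all_algebra.
From mathcomp Require Import all_classical all_reals all_analysis.
From mathcomp Require Import zify ring lra.
Import Order.TTheory GRing.Theory Num.Theory.
Import numFieldNormedType.Exports.

Section Comb.
Variables (b d : nat).
Hypothesis b2 : (2 <= b)%N.

Lemma b_gt0 : (0 < b)%N. Proof. by apply: leq_trans b2. Qed.
Lemma expb_gt0 j : (0 < b ^ j)%N. Proof. by rewrite expn_gt0 b_gt0. Qed.

Lemma blen_spec m : (m < b ^ blen b m)%N /\ (forall i, (i < blen b m)%N -> (b ^ i <= m)%N).
Proof.
have hm : (m < b ^ m)%N by apply: ltn_expl.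
have hh : has (fun l => m < b ^ l)%N (iota 0 m.+1).
  by apply/hasP; exists m; [rewrite mem_iota add0n ltnSn|].
have hf := hh; rewrite has_find size_iota in hf.
rewrite /blen; split.
  by have := nth_find 0 hh; rewrite nth_iota.
move=> i hi; have := before_find 0 hi; rewrite nth_iota ?add0n; last first.
  by apply: ltn_trans hf.
by move/negbT; rewrite -leqNgt.
Qed.

Lemma blen_unique m q : (m < b ^ q)%N -> (forall i, (i < q)%N -> (b ^ i <= m)%N) ->
  blen b m = q.
Proof.
move=> h1 h2; have [s1 s2] := blen_spec m.
case: (ltngtP (blen b m) q) => // h.
  by have := h2 _ h; rewrite leqNgt s1.
by have := s2 _ h; rewrite leqNgt h1.
Qed.

Lemma blen_join n j s : (0 < n)%N -> (s < b ^ j)%N ->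
  blen b (n * b ^ j + s) = (blen b n + j)%N.
Proof.
move=> n0 sj; have [s1 s2] := blen_spec n.
apply: blen_unique.
  rewrite expnD; apply: (@leq_trans ((n.+1) * b ^ j)).
    by rewrite mulSn addnC ltn_add2r.
  by rewrite leq_mul2r s1 orbT.
move=> i hi; case: (ltnP i j) => hij.
  apply: (@leq_trans (b ^ j)); first by rewrite leq_exp2l // ltnW.
  apply: leq_trans (leq_addr _ _); by rewrite leq_pmull.
have -> : i = ((i - j) + j)%N by rewrite subnK.
rewrite expnD; apply: leq_trans (leq_addr _ _); rewrite leq_mul2r s2 ?orbT //.
by rewrite ltn_subLR // addnC.
Qed.

Lemma bdigit_split a j s i : (s < b ^ j)%N ->
  bdigit b (a * b ^ j + s) i = if (i < j)%N then bdigit b s i else bdigit b a (i - j).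
Proof.
move=> sj; rewrite /bdigit; case: ltnP => hij.
  have -> : (a * b ^ j = (a * b ^ (j - i).-1 * b) * b ^ i)%N.
    have e : (b ^ j = b ^ (j - i).-1 * b * b ^ i)%N.
      by rewrite -expnSr prednK ?subn_gt0 // -expnD subnK // ltnW.
    by rewrite e !mulnA.
  by rewrite divnMDl ?expb_gt0 // modnMDl.
have -> : i = (j + (i - j))%N by rewrite subnKC.
by rewrite addKn expnD divnMA divnMDl ?expb_gt0 // (divn_small sj) addn0.
Qed.

Lemma strval_rcons (X : seq 'I_b) x : strval (rcons X x) = (strval X * b + x)%N.
Proof. by rewrite /strval -cats1 foldl_cat. Qed.

Lemma strval_lt (X : seq 'I_b) : (strval X < b ^ size X)%N.
Proof.
elim/last_ind: X => [|X x IH]; first by rewrite /strval /= expn0.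
rewrite strval_rcons size_rcons expnSr.
apply: (@leq_trans ((strval X).+1 * b)).
  by rewrite mulSn addnC ltn_add2r.
by rewrite leq_mul2r IH orbT.
Qed.

Lemma bdigit_rcons v (x : 'I_b) i :
  bdigit b (v * b + x) i = if i is i'.+1 then bdigit b v i' else val x.
Proof.
rewrite /bdigit; case: i => [|i].
  by rewrite expn0 divn1 modnMDl modn_small.
by rewrite expnS divnMA divnMDl ?b_gt0 // (divn_small (ltn_ord x)) addn0.
Qed.

Lemma strcount_digits (X : seq 'I_b) :
  count (fun i => bdigit b (strval X) i == d) (iota 0 (size X)) = strcount d X.
Proof.
elim/last_ind: X => [|X x IH]; first by [].
rewrite strval_rcons size_rcons /strcount -cats1 count_cat /= addn0.
rewrite -/(strcount d X) -IH bdigit_rcons addnC; congr (_ + _)%N.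
rewrite -[1%N]addn0 iotaDl count_map; apply: eq_count => i /=.
by rewrite add1n bdigit_rcons.
Qed.

Lemma kcount_join n j s : (0 < n)%N -> (s < b ^ j)%N ->
  kcount b d (n * b ^ j + s) =
  (kcount b d n + count (fun i => bdigit b s i == d) (iota 0 j))%N.
Proof.
move=> n0 sj; rewrite /kcount blen_join // [(blen b n + j)%N]addnC iotaD count_cat add0n [LHS]addnC.
congr (_ + _)%N.
  rewrite -[j in iota j]addn0 iotaDl count_map; apply: eq_count => i /=.
  by rewrite bdigit_split // ltnNge leq_addr /= addKn.
apply: eq_in_count => i; rewrite mem_iota add0n => /andP[_ hi] /=.
by rewrite bdigit_split // hi.
Qed.

Lemma ld_join n j s : (0 < n)%N -> (s < b ^ j)%N ->
  ld b (blen b n) (n * b ^ j + s) = n.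
Proof.
move=> n0 sj; rewrite /ld blen_join // addKn divnMDl ?expb_gt0 //.
by rewrite (divn_small sj) addn0.
Qed.

Lemma strval_inj (X Y : seq 'I_b) : size X = size Y -> strval X = strval Y -> X = Y.
Proof.
elim/last_ind: X Y => [|X x IH] Y.
  by case: Y.
case/lastP: Y => [|Y y]; first by rewrite size_rcons.
rewrite !size_rcons !strval_rcons => -[hs] hv.
have hx : val x = val y.
  by have := congr1 (modn^~ b) hv; rewrite !modnMDl !modn_small.
have hX : strval X = strval Y.
  have := congr1 (divn^~ b) hv.
  by rewrite !divnMDl ?b_gt0 // !divn_small // !addn0.
by rewrite (IH Y hs hX) (val_inj hx).
Qed.

Lemma str_exists j s : (s < b ^ j)%N ->
  exists X : seq 'I_b, size X = j /\ strval X = s.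
Proof.
elim: j s => [|j IH] s hs.
  by exists [::]; move: hs; rewrite expn0 ltnS leqn0 => /eqP ->.
have hq : (s %/ b < b ^ j)%N by rewrite ltn_divLR ?b_gt0 // -expnSr.
have [X [h1 h2]] := IH _ hq.
exists (rcons X (Ordinal (ltn_pmod s b_gt0))).
by rewrite size_rcons strval_rcons h1 h2 /= -divn_eq.
Qed.

End Comb.

Section Strs.
Variable b : nat.

Fixpoint strs (j : nat) : seq (seq 'I_b) :=
  if j is j'.+1 then [seq rcons s x | s <- strs j', x <- enum 'I_b] else [:: [::]].

Lemma mem_strs j X : (X \in strs j) = (size X == j).
Proof.
elim: j X => [|j IH] X.
  by case: X.
apply/allpairsP/idP.
  by case=> [[s y] [/= hs _ ->]]; rewrite size_rcons eqSS -IH.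
case/lastP: X => [|s y] //; rewrite size_rcons eqSS => hs.
by exists (s, y); split => //=; rewrite ?IH ?mem_enum.
Qed.

Lemma uniq_strs j : uniq (strs j).
Proof.
elim: j => [|j IH] //=.
apply: allpairs_uniq => //; first exact: enum_uniq.
by move=> [s1 x1] [s2 x2] _ _ /= /rcons_inj [-> ->].
Qed.

End Strs.

Section Bound.
Variable R : realType.
Variables (b d : nat).
Hypothesis b2 : (2 <= b)%N.
Hypothesis db : (d < b)%N.
Local Open Scope ring_scope.

Definition Fs j c : R := \sum_(X <- strs b j | strcount d X == c) (b%:R ^+ j)^-1.

Lemma inner_sum (c k : nat) (v : R) :
  \sum_(x <- enum 'I_b) (if (c + (val x == d) == k)%N then v else 0) =
  b.-1%:R * (if c == k then v else 0) + (if c.+1 == k then v else 0).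
Proof.
rewrite big_enum /= (bigD1 (Ordinal db)) //= eqxx addn1 addrC; congr (_ + _).
rewrite (eq_bigr (fun=> if c == k then v else 0)); last first.
  move=> i hi; have -> : (val i == d) = false.
    apply/negbTE; apply: contra hi => /eqP h; apply/eqP; exact: val_inj.
  by rewrite addn0.
rewrite sumr_const mulr_natl; congr (_ *+ _).
have := cardC1 (Ordinal db); rewrite card_ord => <-; exact: eq_card.
Qed.

Lemma br_neq0 : (b%:R : R) != 0.
Proof. by rewrite pnatr_eq0 -lt0n (leq_trans _ b2). Qed.

Lemma Fs_rec j c : Fs j.+1 c =
  b.-1%:R / b%:R * Fs j c + (if c is c'.+1 then Fs j c' else 0) / b%:R.
Proof.
rewrite /Fs; set v := (b%:R ^+ j)^-1 : R.
have hv : (b%:R ^+ j.+1)^-1 = v / b%:R :> R by rewrite exprSr invfM.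
rewrite big_mkcond /= big_allpairs_dep /= hv.
have e2 : (if c is c'.+1 then \sum_(X <- strs b j | strcount d X == c') v else 0) =
    \sum_(s <- strs b j) (if (strcount d s).+1 == c then v else 0).
  case: c => [|c']; first by rewrite big1.
  by rewrite big_mkcond; apply: eq_bigr => s _; rewrite eqSS.
rewrite e2 [X in _ * X + _]big_mkcond /= mulr_sumr mulr_suml -big_split /=.
apply: eq_bigr => s _.
rewrite (eq_bigr (fun x : 'I_b =>
    if ((strcount d s + (val x == d)) == c)%N then v / b%:R else 0)); last first.
  by move=> x _; rewrite /strcount -cats1 count_cat /= addn0.
rewrite inner_sum.
by case: (strcount d s == c); case: ((strcount d s).+1 == c); rewrite ?mulr0 ?mul0r ?addr0 ?add0r //; ring.
Qed.

Lemma Fs0 c : Fs 0 c = if c == 0%N then 1 else 0.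
Proof. by rewrite /Fs /= big_cons big_nil /= expr0 invr1 addr0 eq_sym. Qed.

Lemma Fs_ge0 j c : 0 <= Fs j c.
Proof. by apply: sumr_ge0 => X _; rewrite invr_ge0 exprn_ge0. Qed.

Lemma Fs_bound J c : \sum_(0 <= j < J) Fs j c <= b%:R.
Proof.
have b0 : (0 < b)%N by apply: leq_trans b2.
have br0 : (0 : R) < b%:R by rewrite ltr0n.
have hb : (b.-1%:R : R) = b%:R - 1.
  by rewrite -[in RHS](prednK b0) -addn1 natrD addrK.
have key : forall y : R, y <= b%:R -> b.-1%:R / b%:R * y <= b%:R - 1.
  move=> y hy; apply: le_trans (ler_wpM2l _ hy) _.
    by rewrite divr_ge0 // ler0n.
  by rewrite divfK ?hb // gt_eqF.
have key2 : forall y : R, y <= b%:R -> y / b%:R <= 1.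
  by move=> y hy; rewrite ler_pdivrMr // mul1r.
elim: J c => [|J IH] c; first by rewrite big_geq // ler0n.
rewrite big_nat_recl //.
rewrite (eq_bigr (fun i => b.-1%:R / b%:R * Fs i c +
   (if c is c'.+1 then Fs i c' else 0) / b%:R)); last by move=> i _; rewrite Fs_rec.
rewrite big_split /= -mulr_sumr -mulr_suml Fs0.
case: c => [|c'] /=.
  rewrite big1_eq mul0r addr0.
  have := key _ (IH 0%N); lra.
have := key _ (IH c'.+1); have := key2 _ (IH c'); lra.
Qed.

End Bound.

Local Open Scope classical_set_scope.
Local Open Scope ring_scope.

Section SumCvg.
Variable R : realType.

Lemma cvg_sum_seq (T : Type) (r : seq T) (f : T -> nat -> R) (a : T -> R) :
  (forall t, f t n @[n --> \oo] --> a t) ->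
  (\sum_(t <- r) f t n) @[n --> \oo] --> \sum_(t <- r) a t.
Proof.
move=> h; elim: r => [|t r IH].
  have -> : (fun n => \sum_(t <- [::]) f t n) = fun=> 0.
    by apply/funext => ?; rewrite big_nil.
  rewrite big_nil; exact: cvg_cst.
have -> : (fun n => \sum_(t0 <- t :: r) f t0 n) =
   (f t) + (fun n => \sum_(t0 <- r) f t0 n).
  by apply/funext => ?; rewrite big_cons.
rewrite big_cons; exact: cvgD.
Qed.

End SumCvg.

Section Analytic.
Variable R : realType.
Variable I : Type.
Variables (L : nat -> seq I) (w x : I -> R) (n B : R).
Hypothesis n1 : 1 <= n.
Hypothesis w0 : forall i, 0 <= w i.
Hypothesis x0 : forall i, 0 <= x i.
Hypothesis x1 : forall i, x i < 1.

Definition cc j m := \sum_(i <- L j) w i * x i ^+ m.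
Definition gg j := \sum_(i <- L j) w i / (n + x i).
Definition rr N j := \sum_(i <- L j) w i * x i ^+ N / (n + x i).

Hypothesis Bnd : forall J, series (cc^~ 0%N) J <= B.

Let n0 : 0 < n. Proof. by apply: lt_le_trans n1. Qed.
Let nx0 i : 0 < n + x i. Proof. by apply: ltr_wpDr. Qed.

Lemma cc_ge0 j m : 0 <= cc j m.
Proof. by apply: sumr_ge0 => i _; rewrite mulr_ge0 ?exprn_ge0. Qed.

Lemma cc_le j m : cc j m <= cc j 0.
Proof.
apply: ler_sum => i _; rewrite expr0 mulr1 ler_piMr // exprn_ile1 //.
exact: ltW.
Qed.

Lemma gg_ge0 j : 0 <= gg j.
Proof. by apply: sumr_ge0 => i _; rewrite divr_ge0 // ltW. Qed.

Lemma gg_le j : gg j <= cc j 0.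
Proof.
apply: ler_sum => i _; rewrite expr0 mulr1 ler_pdivrMr // ler_peMr //.
by rewrite -lerBlDl (le_trans _ (x0 i)) // subr_le0.
Qed.

Lemma rr_ge0 N j : 0 <= rr N j.
Proof. by apply: sumr_ge0 => i _; rewrite divr_ge0 ?mulr_ge0 ?exprn_ge0 // ltW. Qed.

Lemma rr_le N j : rr N j <= cc j 0.
Proof.
apply: ler_sum => i _; rewrite expr0 mulr1 ler_pdivrMr //.
apply: (@le_trans _ _ (w i * 1)); first by rewrite ler_wpM2l // exprn_ile1 // ltW.
rewrite mulr1 ler_peMr //.
by rewrite -lerBlDl (le_trans _ (x0 i)) // subr_le0.
Qed.

Lemma cvg_cc0 : cvgn (series (cc^~ 0%N)).
Proof.
apply: nondecreasing_is_cvgn.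
  by apply: nondecreasing_series => k _ _; exact: cc_ge0.
by exists B => _ [J _ <-]; exact: Bnd.
Qed.

Lemma cvg_dom (f : nat -> R) : (forall j, 0 <= f j) -> (forall j, f j <= cc j 0) ->
  cvgn (series f).
Proof.
move=> h1 h2; apply: (series_le_cvg h1 _ h2 cvg_cc0) => j; exact: cc_ge0.
Qed.

Lemma rr_step N j : rr N.+1 j = cc j N - n * rr N j.
Proof.
rewrite /rr /cc mulr_sumr -sumrB; apply: eq_bigr => i _.
have h : n + x i != 0 by rewrite gt_eqF.
by rewrite exprS; field.
Qed.

Lemma diff_id N j :
  gg j - \sum_(0 <= m < N) (-1) ^+ m * cc j m / n ^+ m.+1 = (-1) ^+ N / n ^+ N * rr N j.
Proof.
elim: N => [|N IH].
  rewrite big_geq // subr0 expr0 !expr0 divr1 mul1r /rr /gg.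
  by apply: eq_bigr => i _; rewrite expr0 mulr1.
rewrite big_nat_recr //= opprD addrA IH rr_step.
have h : n ^+ N != 0 by rewrite expf_neq0 // gt_eqF.
have h' : n != 0 by rewrite gt_eqF.
by rewrite !exprS; field; rewrite h h'.
Qed.

Lemma sum_mulr_aux (a c : R) (K : nat) (f : nat -> R) :
  a * (\sum_(0 <= k < K) f k) * c = \sum_(0 <= k < K) a * f k * c.
Proof. by rewrite mulr_sumr mulr_suml. Qed.

Lemma step1 N :
  limn (series gg) - \sum_(0 <= m < N) (-1) ^+ m * limn (series (cc^~ m)) / n ^+ m.+1
  = (-1) ^+ N / n ^+ N * limn (series (rr N)).
Proof.
set U := fun m => limn (series (cc^~ m)).
have cU m : series (cc^~ m) @ \oo --> U m.
  exact: (cvg_dom _ (fun j => cc_ge0 j m) (fun j => cc_le j m)).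
have cS : series gg @ \oo --> limn (series gg) := cvg_dom _ gg_ge0 gg_le.
have cR : series (rr N) @ \oo --> limn (series (rr N)) := cvg_dom _ (rr_ge0 N) (rr_le N).
have h1 : (fun K => series gg K - \sum_(0 <= m < N)
      ((-1) ^+ m * series (cc^~ m) K / n ^+ m.+1)) @ \oo -->
    limn (series gg) - \sum_(0 <= m < N) ((-1) ^+ m * U m / n ^+ m.+1).
  apply: (cvgB cS); apply: cvg_sum_seq => m.
  apply: cvgMr_tmp; apply: cvgMl_tmp; exact: cU.
have h2 : (fun K => series gg K - \sum_(0 <= m < N)
      ((-1) ^+ m * series (cc^~ m) K / n ^+ m.+1)) =
   (fun K => (-1) ^+ N / n ^+ N * series (rr N) K).
  apply/funext => K; rewrite /series /=.
  rewrite [X in _ - X](eq_bigr (fun m => \sum_(0 <= k < K) (-1) ^+ m * cc k m / n ^+ m.+1)); last first.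
    by move=> m _; apply: sum_mulr_aux.
  rewrite exchange_big_nat /= -sumrB mulr_sumr; apply: eq_bigr => k _.
  exact: diff_id.
rewrite h2 in h1.
have h3 : (fun K => (-1) ^+ N / n ^+ N * series (rr N) K) @ \oo -->
    (-1) ^+ N / n ^+ N * limn (series (rr N)) by apply: cvgMl_tmp.
exact: (etrans (esym (cvg_lim _ h1)) (cvg_lim _ h3)).
Qed.

Lemma step2 : (fun N => limn (series (rr N))) @ \oo --> 0.
Proof.
apply/cvgrPdist_le => e e0.
have e2 : 0 < e / 2 by rewrite divr_gt0.
pose C : R := limn (series (cc^~ 0%N)).
have := (cvgrPdist_le _ _).1 cvg_cc0 _ e2; case => J _ hJ.
have hJJ := hJ J (leqnn J).
have fin : (fun N => \sum_(j <- index_iota 0 J) \sum_(i <- L j) w i * x i ^+ N / (n + x i))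
    @ \oo --> \sum_(j <- index_iota 0 J) \sum_(i <- L j) w i * 0 / (n + x i).
  apply: cvg_sum_seq => j; apply: cvg_sum_seq => i.
  apply: cvgMr_tmp; apply: cvgMl_tmp; apply: cvg_expr.
  by rewrite ger0_norm.
rewrite big1 in fin; last by move=> j _; rewrite big1 // => i _; rewrite mulr0 mul0r.
have := (cvgrPdist_le _ _).1 fin _ e2; case => J2 _ hJ2.
exists J2 => // N hN /=.
have hs := hJ2 N hN; rewrite /= in hs.
pose Rn : R := limn (series (rr N)).
have cR : cvgn (series (rr N)) := cvg_dom _ (rr_ge0 N) (rr_le N).
have Rn0 : 0 <= Rn.
  apply: le_trans (nondecreasing_cvgn_le _ cR 0%N).
    by rewrite /series /= big_geq.
  by apply: nondecreasing_series => k _ _; exact: rr_ge0.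
have tail : Rn <= series (rr N) J + (C - series (cc^~ 0%N) J).
  have ct : cvgn (series (rr N) - series (cc^~ 0%N)).
    by apply: is_cvgB; [exact: cR | exact: cvg_cc0].
  have nt : nonincreasing_seq (series (rr N) - series (cc^~ 0%N)).
    apply/nonincreasing_seqP => k; change (series (rr N) k.+1 - series (cc^~ 0%N) k.+1 <= series (rr N) k - series (cc^~ 0%N) k); rewrite !seriesSr.
    have := rr_le N k; lra.
  have hh : Rn - C <= series (rr N) J - series (cc^~ 0%N) J.
    have := nonincreasing_cvgn_ge nt ct J; rewrite limB //; last exact: cvg_cc0.
  rewrite addrCA addrC -lerBlDr; exact: hh.
rewrite sub0r normrN ger0_norm //.
have h1 : series (rr N) J <= e / 2.
  apply: le_trans (ler_norm _) _; rewrite -normrN -sub0r; exact: hs.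
have h2 : C - series (cc^~ 0%N) J <= e / 2 := le_trans (ler_norm _) hJJ.
apply: (le_trans tail); rewrite [leRHS](splitr e); exact: lerD h1 h2.
Qed.

Theorem analytic_main :
  series (fun m => (-1) ^+ m * limn (series (cc^~ m)) / n ^+ m.+1) @ \oo -->
  limn (series gg).
Proof.
apply/cvgrPdist_le => e e0.
have := (cvgrPdist_le _ _).1 step2 _ e0; case => J _ hJ.
exists J => // N hN.
have h := hJ N hN; rewrite /= in h.
have hN' : n ^+ N != 0 by rewrite expf_neq0 // gt_eqF.
have hc : `|(-1) ^+ N / n ^+ N| <= 1.
  rewrite normrM normrX normrN normr1 expr1n mul1r normfV ger0_norm ?exprn_ge0 ?(ltW n0) //.
  by rewrite invr_le1 ?exprn_ege1 ?unitfE ?exprn_gt0.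
change (`|limn (series gg) - \sum_(0 <= m < N) (-1) ^+ m * limn (series (cc^~ m)) / n ^+ m.+1| <= e).
rewrite step1 normrM.
apply: le_trans _ h; rewrite sub0r normrN ler_piMl //.
Qed.

End Analytic.

Section Esum.
Variable R : realType.
Variables (b d k' : nat).

Definition Ls j := [seq X <- strs b j | strcount d X == k'].

Lemma ESUM (f : seq 'I_b -> R) : (forall X, 0 <= f X) ->
  cvgn (series (fun j => \sum_(X <- Ls j) f X)) ->
  (\esum_(X in [set X : seq 'I_b | strcount d X = k']) (f X)%:E =
    (limn (series (fun j => \sum_(X <- Ls j) f X)))%:E)%E.
Proof.
move=> f0 cf.
have hA : [set X : seq 'I_b | strcount d X = k'] = \bigcup_j [set` Ls j].
  apply/seteqP; split => X /=.
    move=> h; exists (size X) => //=.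
    by rewrite mem_filter h eqxx mem_strs eqxx.
  by case=> j _; rewrite /= mem_filter => /andP[/eqP h _].
rewrite hA nneseries_sum_bigcup; last first.
- by move=> X; rewrite lee_fin.
- move=> i j _ _ [X [/=]]; rewrite !mem_filter !mem_strs.
  by case/andP => _ /eqP <- /andP[_ /eqP].
have hE : (fun i => \esum_(j in [set` Ls i]) (f j)%:E)%E =
    fun i => (\sum_(X <- Ls i) f X)%:E.
  apply/funext => i; rewrite esum_fset; last 2 first.
  - exact: finite_seq.
  - by move=> X _; rewrite lee_fin.
  rewrite -fsbig_seq ?filter_uniq ?uniq_strs //.
  by rewrite sumEFin.
rewrite -EFin_lim //; congr (lim (_ @ \oo)); apply/funext => N /=.
transitivity (\sum_(0 <= i < N) (\sum_(X <- Ls i) f X)%:E)%E.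
  apply: eq_bigr => i _; exact: (congr1 (fun g => g i) hE).
by rewrite sumEFin.
Qed.

End Esum.



Lemma set_bij_main b d k n : (2 <= b)%N -> (0 < n)%N -> (kcount b d n <= k)%N ->
 set_bij [set X : seq 'I_b | strcount d X = (k - kcount b d n)%N]
   [set m : nat | [/\ (0 < m)%N, (blen b n <= blen b m)%N,
                   ld b (blen b n) m = n & kcount b d m = k]]
   (fun X => n * b ^ size X + strval X)%N.
Proof.
move=> b2 n0 hk; split.
- move=> X /= hX; split.
  + by rewrite addn_gt0 muln_gt0 n0 expn_gt0 (leq_trans _ b2).
  + by rewrite blen_join // ?leq_addr // strval_lt.
  + by rewrite ld_join // strval_lt.
  + by rewrite kcount_join ?strval_lt // (strcount_digits b d b2 X) hX subnKC.
- move=> X Y _ _ /= e.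
  have hs : size X = size Y.
    by have := congr1 (blen b) e; rewrite !blen_join ?strval_lt // => /addnI.
  rewrite hs in e; have e2 := addnI e.
  exact: strval_inj b2 _ _ hs e2.
- move=> m [m0 hl hld hkm].
  set j := (blen b m - blen b n)%N.
  have hm : m = (n * b ^ j + m %% b ^ j)%N.
    by rewrite {1}(divn_eq m (b ^ j)) -hld mulnC.
  have hb0 : (0 < b ^ j)%N by rewrite expn_gt0 (leq_trans _ b2).
  have [X [hX1 hX2]] := str_exists _ b2 _ _ (ltn_pmod m hb0).
  exists X; last by rewrite /= hX1 hX2 -hm.
  move: hkm; rewrite /= hm kcount_join // ?ltn_pmod // -hX2 -hX1 (strcount_digits b d b2 X) => <-.
  by rewrite addKn.

Qed.

Theorem mainTheorem6 (R : realType) (b d k n l : nat) :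
  (2 <= b)%N -> (d < b)%N -> (0 < n)%N -> l = blen b n ->
  (kcount b d n <= k)%N ->
  exists S : R,
    (\esum_(m in [set m : nat | [/\ (0 < m)%N, (l <= blen b m)%N,
                                   ld b l m = n & kcount b d m = k]])
        (m%:R^-1 : R)%:E)%E = S%:E
    /\ [series (-1) ^+ j * u R b d (k - kcount b d n) j / n%:R ^+ j.+1]_j
         @ \oo --> S.
Proof.
move=> b2 db n0 -> hk.
set k' := (k - kcount b d n)%N.
pose w := fun X : seq 'I_b => (b%:R ^+ size X : R)^-1.
pose x := fun X : seq 'I_b => ((strval X)%:R / b%:R ^+ size X : R).
pose nR : R := n%:R.
pose L := Ls b d k'.
have bR0 : (0 : R) < b%:R by rewrite ltr0n (leq_trans _ b2).
have n1 : 1 <= nR by rewrite ler1n.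
have w0 X : 0 <= w X by rewrite /w invr_ge0 exprn_ge0 // ltW.
have x0 X : 0 <= x X by rewrite /x divr_ge0 ?exprn_ge0 // ltW.
have x1 X : x X < 1.
  rewrite /x ltr_pdivrMr ?exprn_gt0 // mul1r -natrX ltr_nat.
  exact: strval_lt.
have Bnd : forall J, series ((cc R _ L w x)^~ 0%N) J <= b%:R.
  move=> J; apply: le_trans (Fs_bound R b d b2 db J k'); rewrite le_eqVlt; apply/orP; left.
  apply/eqP; rewrite /series /=; apply: eq_bigr => j _.
  rewrite /cc /L /Ls big_filter /Fs [LHS]big_mkcond [RHS]big_mkcond.
  apply: eq_big_seq => X; rewrite mem_strs => /eqP hX.
  by rewrite /w /x hX expr0 mulr1.
have main := analytic_main R _ L w x nR b%:R n1 w0 x0 x1 Bnd.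
exists (limn (series (gg R _ L w x nR))); split.
  rewrite (reindex_esum _ _ _ _ (set_bij_main b d k n b2 n0 hk)).
  rewrite (@eq_esum _ _ _ _ (fun X => (w X / (nR + x X))%:E)); last first.
    move=> X _; congr (_%:E).
    have h1 : (b%:R ^+ size X : R) != 0 by rewrite expf_neq0 // gt_eqF.
    have h2 : nR + x X != 0 by rewrite gt_eqF // (lt_le_trans _ (lerD n1 (x0 X))) ?addr0.
    rewrite /w /x /nR natrD natrM natrX.
    have h3 : (n%:R * b%:R ^+ size X + (strval X)%:R : R) != 0.
      by rewrite gt_eqF // ltr_wpDr // mulr_gt0 // ?ltr0n ?exprn_gt0.
    rewrite /nR /x in h2.
    by field; rewrite h1 h3.
  rewrite (ESUM R b d k' (fun X => w X / (nR + x X))) //.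
    by move=> X; rewrite divr_ge0 ?w0 // addr_ge0 ?x0 // (le_trans ler01 n1).
  apply: (cvg_dom R _ L w x b%:R w0 x0 Bnd) => j.
    exact: (gg_ge0 R _ L w x nR n1 w0 x0).
  exact: (gg_le R _ L w x nR n1 w0 x0).
have hu m : u R b d k' m = limn (series ((cc R _ L w x)^~ m)).
  rewrite /u (ESUM R b d k' (fun X => w X * x X ^+ m)) //.
    by move=> X; rewrite mulr_ge0 ?exprn_ge0.
  apply: (cvg_dom R _ L w x b%:R w0 x0 Bnd) => j.
    exact: (cc_ge0 R _ L w x w0 x0).
  exact: (cc_le R _ L w x w0 x0 x1).
suff -> : [series (-1) ^+ j * u R b d k' j / n%:R ^+ j.+1]_j =
    series (fun m => (-1) ^+ m * limn (series ((cc R _ L w x)^~ m)) / nR ^+ m.+1).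
  exact: main.
apply/funext => N; rewrite /series /=; apply: eq_bigr => m _.
by rewrite hu.
Qed.
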